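(* Let $m\ge 2$ be an integer and let $F\subseteq\mathbb Z$ be a finite nonempty set whose elements all lie in a single congruence class modulo $m$, and this class is not $0\bmod m$. Then $C=m\mathbb N\cup F$ arises as a minimal additive complement in $\mathbb Z$.
   Context: $\mathbb N=\{0,1,2,\dots\}$ and $m\mathbb N=\{mk:k\in\mathbb N\}$. For $C,W\subseteq\mathbb Z$, $C+W=\{c+w:c\in C,w\in W\}$. $C$ is a minimal additive complement (MAC) to $W$ if $C+W=\mathbb Z$ and no proper subset $C'\subsetneq C$ satisfies $C'+W=\mathbb Z$. $C$ arises as a MAC if there exists $W\subseteq\mathbb Z$ to which $C$ is a MAC. *)

(* Defs.v *)
From Stdlib Require Import ZArith List.
Open Scope Z_scope.

Definition sumset_is_Z (C W : Z -> Prop) : Prop :=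
  forall z : Z, exists c w, C c /\ W w /\ z = c + w.

Definition is_MAC (C W : Z -> Prop) : Prop :=
  sumset_is_Z C W /\
  forall C' : Z -> Prop,
    (forall x, C' x -> C x) -> sumset_is_Z C' W -> forall x, C x -> C' x.

Definition arises_as_MAC (C : Z -> Prop) : Prop :=
  exists W : Z -> Prop, is_MAC C W.

Definition mult_nat (m : Z) (x : Z) : Prop := exists k : Z, 0 <= k /\ x = m * k.

(* Main.v *)
Require Import Defs.
From Stdlib Require Import ZArith List Lia Classical.
Open Scope Z_scope.

Lemma list_max (F : list Z) : F <> nil -> exists x, In x F /\ forall y, In y F -> y <= x.
Proof.
  induction F as [|a F IH]; intros H; [congruence|].
  destruct F as [|b F'].
  - exists a. split; [left; auto|]. intros y [->|[]]; lia.
  - destruct IH as (x & hx & hb); [discriminate|].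
    exists (Z.max a x). split.
    + destruct (Z.max_spec a x) as [[_ ->]|[_ ->]]; [right; auto|left; auto].
    + intros y [<-|hy]; [lia|]. specialize (hb y hy). lia.
Qed.

Lemma list_min (F : list Z) : F <> nil -> exists x, In x F /\ forall y, In y F -> x <= y.
Proof.
  induction F as [|a F IH]; intros H; [congruence|].
  destruct F as [|b F'].
  - exists a. split; [left; auto|]. intros y [->|[]]; lia.
  - destruct IH as (x & hx & hb); [discriminate|].
    exists (Z.min a x). split.
    + destruct (Z.min_spec a x) as [[_ ->]|[_ ->]]; [left; auto|right; auto].
    + intros y [<-|hy]; [lia|]. specialize (hb y hy). lia.
Qed.

Lemma list_bound (F : list Z) : exists M, 0 <= M /\ forall y, In y F -> -M <= y <= M.
Proof.
  induction F as [|a F IH].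
  - exists 0. split; [lia|]. intros y [].
  - destruct IH as (M & hM & hb). exists (Z.abs a + M). split; [lia|].
    intros y [<-|hy]; [lia|]. specialize (hb y hy). lia.
Qed.

Lemma dv_add m a b e : (m | a) -> (m | b) -> e = a + b -> (m | e).
Proof. intros H1 H2 ->. apply Z.divide_add_r; auto. Qed.
Lemma dv_sub m a b e : (m | a) -> (m | b) -> e = a - b -> (m | e).
Proof. intros H1 H2 ->. apply Z.divide_sub_r; auto. Qed.

Theorem proposition2 (m : Z) (F : list Z) (r : Z) :
  2 <= m ->
  F <> nil ->
  r mod m <> 0 ->
  (forall f, In f F -> f mod m = r mod m) ->
  arises_as_MAC (fun x => mult_nat m x \/ In x F).
Proof.
  intros hm hF hr hFr.
  destruct (list_max F hF) as (fmax & hfmax & Hmax).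
  destruct (list_min F hF) as (fmin & hfmin & Hmin).
  destruct (list_bound F) as (M & hM & HM).
  assert (hr' : ~ (m | r)).
  { intro H. apply hr. apply Z.mod_divide; [lia|auto]. }
  assert (hFd : forall f, In f F -> (m | f - r)).
  { intros f hf. apply Z.mod_divide; [lia|]. apply Z.cong_iff_0. auto. }
  set (S := 4*M+1).
  set (zz := fun g => -(m*S*(g+M+1))).
  assert (zz_div : forall g, (m | zz g)).
  { intro g. exists (-(S*(g+M+1))). unfold zz. ring. }
  assert (zz_neg : forall g, In g F -> zz g <= -(8*M+2)).
  { intros g hg. specialize (HM g hg). unfold zz, S.
    assert (m*(4*M+1)*(g+M+1) >= m*(4*M+1)) by nia. nia. }
  assert (zz_lb : forall g, In g F -> zz g >= -(m*S*(2*M+1))).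
  { intros g hg. specialize (HM g hg). unfold zz, S. nia. }
  assert (spacing : forall g h, In g F -> In h F -> -(4*M) <= zz g - zz h <= 4*M -> g = h).
  { intros g h hg hh Hd. unfold zz, S in Hd.
    destruct (Z.eq_dec g h) as [e|ne]; [auto|exfalso].
    assert (e2 : -(m * (4 * M + 1) * (g + M + 1)) - - (m * (4 * M + 1) * (h + M + 1))
                 = m*(4*M+1)*(h-g)) by ring.
    rewrite e2 in Hd.
    destruct (Z_lt_le_dec g h).
    - assert (m*(4*M+1)*(h-g) >= m*(4*M+1)) by nia. nia.
    - assert (m*(4*M+1)*(g-h) >= m*(4*M+1)) by nia. nia. }
  set (Forb := fun x => exists g g', In g F /\ In g' F /\ g <> g' /\ x = zz g - g').
  set (W := fun x => x = 0 \/ (~ (m | x) /\ ~ (m | x + r)) \/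
                     ((m | x + r) /\ x + fmax < 0 /\ ~ Forb x)).
  assert (mn_div : forall x, mult_nat m x -> (m | x)).
  { intros x (k & _ & ->). exists k. ring. }
  exists W. split.
  -
    intro z. destruct (classic (m | z)) as [hz|hz].
    + destruct (Z_lt_le_dec z 0) as [zneg|zpos].
      * destruct (classic (Forb (z - fmax))) as [hfb|hfb].
        -- destruct hfb as (g & g' & hg & hg' & ne & e).
           pose proof (HM g hg). pose proof (HM g' hg'). pose proof (Hmax g' hg').
           pose proof (zz_neg g hg). pose proof (HM fmax hfmax).
           destruct (Z.eq_dec g' fmax) as [eq|neq].
           ++ exists g, (z - g). split; [right; auto|]. split; [|ring].
              right; right. split; [|split].
              ** apply (dv_sub _ z (g - r)); auto. ring.
              ** lia.
              ** intros (h & h' & hh & hh' & ne' & e').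
                 assert (g = h) by (apply spacing; auto; pose proof (HM h' hh'); lia).
                 subst h. lia.
           ++ pose proof (Hmin g' hg').
              exists fmin, (z - fmin). split; [right; auto|]. split; [|ring].
              right; right. split; [|split].
              ** apply (dv_sub _ z (fmin - r)); auto. ring.
              ** pose proof (HM fmin hfmin). pose proof (HM fmax hfmax). lia.
              ** intros (h & h' & hh & hh' & ne' & e').
                 pose proof (HM h' hh'). pose proof (HM fmin hfmin).
                 assert (g = h) by (apply spacing; auto; lia).
                 subst h. pose proof (Hmin h' hh'). lia.
        -- exists fmax, (z - fmax). split; [right; auto|]. split; [|ring].
           right; right. split; [|split]; auto.
           ++ apply (dv_sub _ z (fmax - r)); auto. ring.
           ++ lia.
      * destruct hz as [k hk]. exists z, 0. split; [left; exists k; split; [|lia]|].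
        { destruct (Z_lt_le_dec k 0); [|lia]. nia. }
        split; [left; auto|ring].
    + destruct (classic (m | z + r)) as [hzr|hzr].
      * set (B := m*S*(2*M+1) + M).
        assert (hB : 0 <= B) by (unfold B, S; nia).
        set (k := Z.abs z + B + M + 1).
        exists (m*k), (z - m*k). split; [left; exists k; split; [lia|ring]|].
        split; [|ring].
        assert (hw : z - m*k <= - B - M - 1) by (unfold k; nia).
        right; right. split; [|split].
        -- apply (dv_sub _ (z + r) (m*k)); [auto| exists k; ring | ring].
        -- pose proof (HM fmax hfmax). lia.
        -- intros (h & h' & hh & hh' & ne' & e').
           pose proof (zz_lb h hh). pose proof (HM h' hh'). unfold B in hw. lia.
      * exists 0, z. split; [left; exists 0; split; lia|]. split; [|ring].
        right; left. auto.
  - intros C' sub cov x hx.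
    destruct hx as [hx|hx].
    + destruct hx as (k & hk & ex).
      destruct (cov x) as (c & w & hc & hw & e).
      pose proof (sub c hc) as hcC.
      destruct hw as [->|[[h1 h2]|(h1 & h2 & h3)]].
      * replace x with c by lia. exact hc.
      * exfalso. destruct hcC as [hc'|hc'].
        -- apply h1. apply (dv_sub _ x c); [exists k; lia|auto|lia].
        -- apply h2. apply (dv_sub _ x (c - r)); [exists k; lia|auto|lia].
      * exfalso. destruct hcC as [hc'|hc'].
        -- apply hr'. apply (dv_sub _ (w + r) (x - c)); auto; [|lia].
           apply (dv_sub _ x c); [exists k; lia|auto|lia].
        -- pose proof (Hmax c hc'). nia.
    + destruct (cov (zz x)) as (c & w & hc & hw & e).
      pose proof (sub c hc) as hcC.
      pose proof (zz_neg x hx).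
      destruct hw as [->|[[h1 h2]|(h1 & h2 & h3)]].
      * exfalso. destruct hcC as [hc'|hc'].
        -- destruct hc' as (k & hk & ek). nia.
        -- apply hr'. apply (dv_sub _ c (c - r)); auto; [|ring].
           rewrite <- (Z.add_0_r c), <- e. auto.
      * exfalso. destruct hcC as [hc'|hc'].
        -- apply h1. apply (dv_sub _ (zz x) c); auto; lia.
        -- apply h2. apply (dv_sub _ (zz x) (c - r)); auto; lia.
      * destruct hcC as [hc'|hc'].
        -- exfalso. apply hr'. apply (dv_sub _ (w + r) w); auto; [|ring].
           apply (dv_sub _ (zz x) c); auto; lia.
        -- destruct (Z.eq_dec c x) as [<-|ne]; [auto|].
           exfalso. apply h3. exists x, c. repeat split; auto. lia.
Qed.
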